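(* Let $W\subset\mathbb{R}$ have no isolated points and satisfy $0\in W$. Let $\Psi:\mathbb{R}\to\mathbb{R}$ be $C^\infty$ on some open interval $I$ and not equal to a polynomial on $I$. Then for each integer $n\ge0$ the function $x\mapsto x^n$ can be approximated uniformly on every compact subset of $\mathbb{R}$ by elements of $\mathcal{N}_1(\Psi,W,I)=\mathrm{span}\{x\mapsto\Psi(wx+b):w\in W,\ b\in I\}$. In particular, $\mathcal{N}_1(\Psi,W,I)$ is dense in $C(\mathbb{R})$ in the sense of uniform convergence on compact sets.
   Context: A set $S$ of functions $\mathbb{R}\to\mathbb{R}$ is dense in $C(\mathbb{R})$ in the sense of uniform convergence on compact sets if for every nonempty compact $K\subset\mathbb{R}$, every $g\in C(\mathbb{R})$ and every $\varepsilon>0$ there is $s\in S$ with $\sup_{x\in K}|s(x)-g(x)|<\varepsilon$. ''$W$ has no isolated points'' means every point of $W$ is a limit of points of $W\setminus\{w\}$. *)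

(* Defs.v *)
From Stdlib Require Import Reals Lra List.
From Stdlib Require Rtopology.
From Coquelicot Require Import Coquelicot.
Open Scope R_scope.

Definition in_ival (a b : Rbar) (x : R) : Prop := Rbar_lt a x /\ Rbar_lt x b.

Definition no_isolated_points (W : R -> Prop) : Prop :=
  forall w, W w -> forall e, 0 < e -> exists v, W v /\ v <> w /\ Rabs (v - w) < e.

Definition smooth_on (Psi : R -> R) (a b : Rbar) : Prop :=
  forall (k : nat) (x : R), in_ival a b x -> ex_derive_n Psi k x.

Definition is_poly_on (Psi : R -> R) (a b : Rbar) : Prop :=
  exists (d : nat) (c : nat -> R),
    forall x, in_ival a b x -> Psi x = sum_f_R0 (fun k => c k * x ^ k) d.

Definition eval_comb (Psi : R -> R) (l : list (R * R * R)) (x : R) : R :=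
  fold_right (fun t acc => let '(c, w, b) := t in c * Psi (w * x + b) + acc) 0 l.

Definition in_N1 (Psi : R -> R) (W : R -> Prop) (a b : Rbar) (f : R -> R) : Prop :=
  exists l : list (R * R * R),
    List.Forall (fun t : R * R * R => W (snd (fst t)) /\ in_ival a b (snd t)) l /\
    forall x, f x = eval_comb Psi l x.

Definition sup_dist_lt (K : R -> Prop) (s g : R -> R) (eps : R) : Prop :=
  exists d, d < eps /\ forall x, K x -> Rabs (s x - g x) <= d.

Definition approximable (S : (R -> R) -> Prop) (g : R -> R) : Prop :=
  forall K : R -> Prop, Rtopology.compact K -> (exists x, K x) ->
  forall eps, 0 < eps -> exists s, S s /\ sup_dist_lt K s g eps.

Definition dense_in_CR (S : (R -> R) -> Prop) : Prop :=
  forall g : R -> R, (forall x, continuity_pt g x) -> approximable S g.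

(* Main.v *)
Require Import Defs.
From Stdlib Require Import Reals Lra Lia List Classical.
From Coquelicot Require Import Coquelicot.
Open Scope R_scope.

Section N1.
Variables (Psi : R -> R) (W : R -> Prop) (a b : Rbar).

Lemma eval_comb_app l1 l2 x :
  eval_comb Psi (l1 ++ l2) x = eval_comb Psi l1 x + eval_comb Psi l2 x.
Proof.
  induction l1 as [|[[c w] bb] l1 IH]; simpl; [lra|]. rewrite IH; lra.
Qed.

Definition scale_list (k : R) (l : list (R*R*R)) :=
  map (fun t : R*R*R => let '(c, w, bb) := t in (k * c, w, bb)) l.

Lemma eval_comb_scale k l x :
  eval_comb Psi (scale_list k l) x = k * eval_comb Psi l x.
Proof.
  induction l as [|[[c w] bb] l IH]; simpl; [lra|]. rewrite IH; lra.
Qed.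

Lemma in_N1_add f g : in_N1 Psi W a b f -> in_N1 Psi W a b g ->
  in_N1 Psi W a b (fun x => f x + g x).
Proof.
  intros [l1 [H1 E1]] [l2 [H2 E2]]. exists (l1 ++ l2); split.
  - apply Forall_app; auto.
  - intros x; rewrite eval_comb_app, E1, E2; reflexivity.
Qed.

Lemma in_N1_scal k f : in_N1 Psi W a b f -> in_N1 Psi W a b (fun x => k * f x).
Proof.
  intros [l1 [H1 E1]]. exists (scale_list k l1); split.
  - unfold scale_list. apply Forall_map. eapply Forall_impl; [|exact H1].
    intros [[c w] bb]; simpl; auto.
  - intros x; rewrite eval_comb_scale, E1; reflexivity.
Qed.

Lemma in_N1_zero : in_N1 Psi W a b (fun _ => 0).
Proof. exists nil; split; [constructor|reflexivity]. Qed.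


Lemma in_N1_unit w bb : W w -> in_ival a b bb -> in_N1 Psi W a b (fun x => Psi (w * x + bb)).
Proof.
  intros Hw Hb. exists ((1, w, bb) :: nil); split.
  - constructor; [simpl; auto | constructor].
  - intros x; simpl; lra.
Qed.

Definition ApproxOn (Rr : R) (g : R -> R) : Prop :=
  forall eps, 0 < eps -> exists s, in_N1 Psi W a b s /\
    forall x, - Rr <= x <= Rr -> Rabs (s x - g x) <= eps.

Lemma ApproxOn_ext Rr g h : (forall x, - Rr <= x <= Rr -> g x = h x) ->
  ApproxOn Rr g -> ApproxOn Rr h.
Proof.
  intros E H eps Heps. destruct (H eps Heps) as [s [Hs B]]. exists s; split; auto.
  intros x Hx. rewrite <- E; auto.
Qed.

Lemma ApproxOn_add Rr f g : ApproxOn Rr f -> ApproxOn Rr g -> ApproxOn Rr (fun x => f x + g x).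
Proof.
  intros Hf Hg eps Heps.
  destruct (Hf (eps/2)) as [s1 [H1 B1]]; [lra|].
  destruct (Hg (eps/2)) as [s2 [H2 B2]]; [lra|].
  exists (fun x => s1 x + s2 x); split; [apply in_N1_add; auto|].
  intros x Hx. specialize (B1 x Hx); specialize (B2 x Hx).
  replace (s1 x + s2 x - (f x + g x)) with ((s1 x - f x) + (s2 x - g x)) by ring.
  eapply Rle_trans; [apply Rabs_triang|]. lra.
Qed.

Lemma ApproxOn_scal Rr k f : ApproxOn Rr f -> ApproxOn Rr (fun x => k * f x).
Proof.
  intros Hf eps Heps.
  destruct (Hf (eps / (Rabs k + 1))) as [s1 [H1 B1]].
  { apply Rdiv_lt_0_compat; [lra|]. pose proof (Rabs_pos k); lra. }
  exists (fun x => k * s1 x); split; [apply in_N1_scal; auto|].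
  intros x Hx. specialize (B1 x Hx).
  replace (k * s1 x - k * f x) with (k * (s1 x - f x)) by ring.
  rewrite Rabs_mult.
  pose proof (Rabs_pos k). pose proof (Rabs_pos (s1 x - f x)).
  apply Rle_trans with ((Rabs k + 1) * (eps / (Rabs k + 1))).
  - apply Rle_trans with ((Rabs k + 1) * Rabs (s1 x - f x)); [nra|].
    apply Rmult_le_compat_l; lra.
  - right; field; lra.
Qed.

Lemma ApproxOn_zero Rr : ApproxOn Rr (fun _ => 0).
Proof.
  intros eps Heps. exists (fun _ => 0); split; [apply in_N1_zero|].
  intros; rewrite Rminus_0_r, Rabs_R0; lra.
Qed.

Lemma ApproxOn_lim Rr g :
  (forall eps, 0 < eps -> exists h, ApproxOn Rr h /\
     forall x, - Rr <= x <= Rr -> Rabs (h x - g x) <= eps) -> ApproxOn Rr g.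
Proof.
  intros H eps Heps.
  destruct (H (eps/2)) as [h [Hh B1]]; [lra|].
  destruct (Hh (eps/2)) as [s [Hs B2]]; [lra|].
  exists s; split; auto. intros x Hx.
  specialize (B1 x Hx); specialize (B2 x Hx).
  replace (s x - g x) with ((s x - h x) + (h x - g x)) by ring.
  eapply Rle_trans; [apply Rabs_triang|]. lra.
Qed.

End N1.

Fixpoint peval (l : list R) (x : R) : R :=
  match l with nil => 0 | c :: l' => c + x * peval l' x end.

Fixpoint padd (l1 l2 : list R) : list R :=
  match l1, l2 with
  | nil, _ => l2
  | _, nil => l1
  | c1 :: r1, c2 :: r2 => (c1 + c2) :: padd r1 r2
  end.

Lemma peval_add l1 l2 x : peval (padd l1 l2) x = peval l1 x + peval l2 x.
Proof.
  revert l2; induction l1 as [|c1 r1 IH]; intros [|c2 r2]; simpl; try lra.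
  rewrite IH; ring.
Qed.

Definition pscal (k : R) (l : list R) := map (fun c => k * c) l.

Lemma peval_scal k l x : peval (pscal k l) x = k * peval l x.
Proof. induction l as [|c l IH]; simpl; [ring|]. rewrite IH; ring. Qed.

Fixpoint pmul (l1 l2 : list R) : list R :=
  match l1 with nil => nil | c :: r => padd (pscal c l2) (0 :: pmul r l2) end.

Lemma peval_mul l1 l2 x : peval (pmul l1 l2) x = peval l1 x * peval l2 x.
Proof.
  induction l1 as [|c r IH]; simpl; [ring|].
  rewrite peval_add, peval_scal; simpl; rewrite IH; ring.
Qed.

Definition Poly (f : R -> R) := exists l, forall x, f x = peval l x.

Lemma Poly_const c : Poly (fun _ => c).
Proof. exists (c :: nil); intros; simpl; ring. Qed.
Lemma Poly_id : Poly (fun x => x).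
Proof. exists (0 :: 1 :: nil); intros; simpl; ring. Qed.
Lemma Poly_add f g : Poly f -> Poly g -> Poly (fun x => f x + g x).
Proof. intros [l1 H1] [l2 H2]; exists (padd l1 l2); intros; rewrite peval_add, H1, H2; auto. Qed.
Lemma Poly_mul f g : Poly f -> Poly g -> Poly (fun x => f x * g x).
Proof. intros [l1 H1] [l2 H2]; exists (pmul l1 l2); intros; rewrite peval_mul, H1, H2; auto. Qed.
Lemma Poly_ext f g : (forall x, f x = g x) -> Poly f -> Poly g.
Proof. intros E [l H]; exists l; intros; rewrite <- E; auto. Qed.
Lemma Poly_pow f n : Poly f -> Poly (fun x => f x ^ n).
Proof.
  intros Hf; induction n; simpl.
  - apply Poly_const.
  - apply Poly_mul; auto.
Qed.
Lemma Poly_sum (F : nat -> R -> R) n : (forall k, (k <= n)%nat -> Poly (F k)) ->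
  Poly (fun x => sum_f_R0 (fun k => F k x) n).
Proof.
  induction n; intros H; simpl.
  - apply H; auto.
  - apply Poly_add; auto.
Qed.

Lemma peval_sum l x : peval l x = sum_f_R0 (fun k => nth k l 0 * x ^ k) (length l).
Proof.
  induction l as [|c l IH].
  - simpl; ring.
  - change (length (c :: l)) with (S (length l)).
    rewrite (decomp_sum _ (S (length l))) by lia. simpl pred. simpl peval.
    rewrite IH, scal_sum. simpl. f_equal; [ring|]. apply sum_eq; intros; simpl; ring.
Qed.

Lemma C_succ p i : (i <= p)%nat -> INR (S i) * Binomial.C (S p) (S i) = INR (S p) * Binomial.C p i.
Proof.
  intros Hi. unfold Binomial.C. replace (S p - S i)%nat with (p - i)%nat by lia.
  change (Factorial.fact (S p)) with (S p * Factorial.fact p)%nat. change (Factorial.fact (S i)) with (S i * Factorial.fact i)%nat.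
  rewrite !mult_INR.
  pose proof (INR_fact_neq_0 p). pose proof (INR_fact_neq_0 i). pose proof (INR_fact_neq_0 (p - i)).
  assert (INR (S i) <> 0) by (apply not_0_INR; lia).
  field; auto.
Qed.

Lemma bern_key (h : nat -> R) p x y :
  sum_f_R0 (fun k => h k * INR k * (Binomial.C (S p) k * x ^ k * y ^ (S p - k))) (S p) =
  INR (S p) * x * sum_f_R0 (fun j => h (S j) * (Binomial.C p j * x ^ j * y ^ (p - j))) p.
Proof.
  rewrite decomp_sum by lia. simpl pred. rewrite scal_sum.
  replace (h 0%nat * INR 0 * _) with 0 by (simpl; ring). rewrite Rplus_0_l.
  apply sum_eq; intros i Hi.
  replace (S p - S i)%nat with (p - i)%nat by lia.
  simpl pow.
  replace (h (S i) * INR (S i) * (Binomial.C (S p) (S i) * (x * x ^ i) * y ^ (p - i)))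
    with (h (S i) * (INR (S i) * Binomial.C (S p) (S i)) * (x * x ^ i) * y ^ (p - i)) by ring.
  rewrite C_succ by lia. ring.
Qed.

Definition Bn (n k : nat) (t : R) := Binomial.C n k * t ^ k * (1 - t) ^ (n - k).

Lemma bern_S0 n t : sum_f_R0 (fun k => Bn n k t) n = 1.
Proof.
  unfold Bn. rewrite <- binomial. replace (t + (1 - t)) with 1 by ring. apply pow1.
Qed.

Lemma bern_S1 n t : sum_f_R0 (fun k => INR k * Bn n k t) n = INR n * t.
Proof.
  destruct n as [|p].
  - simpl. ring.
  - unfold Bn.
    transitivity (sum_f_R0 (fun k => (fun _ => 1) k * INR k * (Binomial.C (S p) k * t ^ k * (1-t) ^ (S p - k))) (S p)).
    + apply sum_eq; intros; ring.
    + rewrite bern_key.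
      assert (E : sum_f_R0 (fun j => 1 * (Binomial.C p j * t ^ j * (1 - t) ^ (p - j))) p = 1).
      { transitivity (sum_f_R0 (fun k => Bn p k t) p); [|apply bern_S0].
        apply sum_eq; intros; unfold Bn; ring. }
      rewrite E; ring.
Qed.

Lemma bern_S2 n t : sum_f_R0 (fun k => INR k * INR k * Bn n k t) n = INR n * t * ((INR n - 1) * t + 1).
Proof.
  destruct n as [|p].
  - simpl. ring.
  - unfold Bn. rewrite bern_key.
    assert (E : sum_f_R0 (fun j => INR (S j) * (Binomial.C p j * t ^ j * (1 - t) ^ (p - j))) p = INR p * t + 1).
    { transitivity (sum_f_R0 (fun k => INR k * Bn p k t) p + sum_f_R0 (fun k => Bn p k t) p);
        [|rewrite bern_S0, bern_S1; ring].
      rewrite <- sum_plus. apply sum_eq; intros; unfold Bn.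
      rewrite S_INR; ring. }
    rewrite E, S_INR; ring.
Qed.

Lemma sum_scal_r (A : nat -> R) c N : sum_f_R0 (fun k => A k * c) N = sum_f_R0 A N * c.
Proof. rewrite Rmult_comm, scal_sum; reflexivity. Qed.

Lemma bern_var n t : (0 < n)%nat ->
  sum_f_R0 (fun k => (INR k / INR n - t) ^ 2 * Bn n k t) n = t * (1 - t) / INR n.
Proof.
  intros Hn. assert (Hn' : INR n <> 0) by (apply not_0_INR; lia).
  transitivity (sum_f_R0 (fun k => INR k * INR k * Bn n k t * (1 / (INR n * INR n))) n
     + sum_f_R0 (fun k => INR k * Bn n k t * (- 2 * t / INR n)) n
     + sum_f_R0 (fun k => Bn n k t * (t * t)) n).
  - rewrite <- !sum_plus. apply sum_eq; intros. field; auto.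
  - rewrite !sum_scal_r, bern_S0, bern_S1, bern_S2. field; auto.
Qed.

Lemma Bn_ge0 n k t : 0 <= t <= 1 -> 0 <= Bn n k t.
Proof.
  intros Ht. unfold Bn, Binomial.C.
  pose proof (INR_fact_lt_0 n). pose proof (INR_fact_lt_0 k). pose proof (INR_fact_lt_0 (n - k)).
  apply Rmult_le_pos; [apply Rmult_le_pos|]; try (apply pow_le; lra).
  apply Rlt_le, Rdiv_lt_0_compat; auto. apply Rmult_lt_0_compat; auto.
Qed.

Lemma bern_approx (f : R -> R) Mb e d : 0 < e -> 0 < d ->
  (forall s t, 0 <= s <= 1 -> 0 <= t <= 1 -> Rabs (s - t) < d -> Rabs (f s - f t) <= e) ->
  (forall s, 0 <= s <= 1 -> Rabs (f s) <= Mb) ->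
  exists n, forall t, 0 <= t <= 1 ->
    Rabs (sum_f_R0 (fun k => f (INR k / INR n) * Bn n k t) n - f t) <= 2 * e.
Proof.
  intros He Hd Hu Hb.
  assert (HM : 0 <= Mb) by (eapply Rle_trans; [apply Rabs_pos| apply (Hb 0); lra]).
  set (c := 2 * Mb / (d * d)).
  assert (Hc : 0 <= c) by (unfold c; apply Rmult_le_pos; [lra| apply Rlt_le, Rinv_0_lt_compat; nra]).
  destruct (INR_unbounded (c / e)) as [n0 Hn0].
  set (n := S n0).
  assert (Hn : 0 < INR n) by (apply lt_0_INR; unfold n; lia).
  assert (Hnn : c / e < INR n) by (unfold n; rewrite S_INR; lra).
  exists n. intros t Ht.
  assert (Hpt : forall s, 0 <= s <= 1 -> Rabs (f s - f t) <= e + c * (s - t) ^ 2).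
  { intros s Hs. destruct (Rlt_or_le (Rabs (s - t)) d) as [Hl|Hl].
    - pose proof (Hu s t Hs Ht Hl). assert (0 <= c * (s - t)^2) by (apply Rmult_le_pos; [auto| apply pow2_ge_0]). lra.
    - assert (Hsq : d * d <= (s - t) ^ 2).
      { revert Hl. unfold Rabs; destruct (Rcase_abs (s - t)); intros; simpl; nra. }
      assert (c * (s - t) ^ 2 >= 2 * Mb).
      { unfold c. unfold Rdiv. replace (2 * Mb * / (d * d) * (s - t) ^ 2) with (2 * Mb * ((s - t) ^ 2 / (d * d))) by (field; lra).
        assert (1 <= (s - t) ^ 2 / (d * d)).
        { apply (Rmult_le_reg_r (d * d)); [nra|]. unfold Rdiv; rewrite Rmult_assoc, Rinv_l by nra. lra. }
        nra. }
      pose proof (Hb s Hs). pose proof (Hb t Ht).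
      eapply Rle_trans; [apply Rabs_triang|]. rewrite Rabs_Ropp. lra. }
  assert (E : sum_f_R0 (fun k => f (INR k / INR n) * Bn n k t) n - f t
              = sum_f_R0 (fun k => (f (INR k / INR n) - f t) * Bn n k t) n).
  { transitivity (sum_f_R0 (fun k => f (INR k / INR n) * Bn n k t) n + sum_f_R0 (fun k => Bn n k t * (- f t)) n).
    - rewrite sum_scal_r, bern_S0; ring.
    - rewrite <- sum_plus; apply sum_eq; intros; ring. }
  rewrite E. eapply Rle_trans; [apply Rsum_abs|].
  apply Rle_trans with (sum_f_R0 (fun k => (e + c * (INR k / INR n - t) ^ 2) * Bn n k t) n).
  { apply sum_Rle; intros k Hk. rewrite Rabs_mult, (Rabs_pos_eq (Bn n k t)) by (apply Bn_ge0; auto).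
    apply Rmult_le_compat_r; [apply Bn_ge0; auto|]. apply Hpt.
    assert (0 <= INR k) by apply pos_INR. assert (INR k <= INR n) by (apply le_INR; auto).
    split; [apply Rmult_le_pos; [lra| apply Rlt_le, Rinv_0_lt_compat; lra]|].
    apply (Rmult_le_reg_r (INR n)); auto. unfold Rdiv; rewrite Rmult_assoc, Rinv_l by lra. lra. }
  assert (Es : sum_f_R0 (fun k => (e + c * (INR k / INR n - t) ^ 2) * Bn n k t) n
     = sum_f_R0 (fun k => Bn n k t * e) n + sum_f_R0 (fun k => (INR k / INR n - t) ^ 2 * Bn n k t * c) n).
  { rewrite <- sum_plus; apply sum_eq; intros; ring. }
  rewrite Es, !sum_scal_r, bern_S0, bern_var by (unfold n; lia).
  assert (c < e * INR n).
  { apply (Rmult_lt_reg_r (/ e)); [apply Rinv_0_lt_compat; lra|].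
    replace (e * INR n * / e) with (INR n) by (field; lra). exact Hnn. }
  assert (t * (1 - t) / INR n * c <= c / INR n).
  { unfold Rdiv. assert (0 < / INR n) by (apply Rinv_0_lt_compat; lra).
    assert (t * (1 - t) <= 1) by nra. assert (0 <= / INR n * c) by (apply Rmult_le_pos; lra). nra. }
  assert (c / INR n < e).
  { apply (Rmult_lt_reg_r (INR n)); auto. unfold Rdiv; rewrite Rmult_assoc, Rinv_l by lra. lra. }
  lra.
Qed.

Lemma weierstrass g m M : m < M -> (forall x, m <= x <= M -> continuity_pt g x) ->
  forall eps, 0 < eps -> exists l, forall x, m <= x <= M -> Rabs (peval l x - g x) <= eps.
Proof.
  intros Hm Hc eps Heps.
  set (L := M - m). assert (HL : 0 < L) by (unfold L; lra).
  pose proof (Heine g (fun c => m <= c <= M) (compact_P3 m M) Hc) as Hu.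
  destruct (Hu (mkposreal (eps/2) ltac:(lra))) as [dg Hdg]. simpl in Hdg.
  destruct (continuity_ab_maj g m M (Rlt_le _ _ Hm) Hc) as [xM [HxM HxM']].
  destruct (continuity_ab_min g m M (Rlt_le _ _ Hm) Hc) as [xm [Hxm Hxm']].
  set (f := fun s => g (m + L * s)).
  assert (Hin : forall s, 0 <= s <= 1 -> m <= m + L * s <= M).
  { intros s Hs. unfold L in *. split; nra. }
  destruct (bern_approx f (Rabs (g xM) + Rabs (g xm)) (eps/2) (dg / L)) as [n Hn].
  - lra.
  - apply Rdiv_lt_0_compat; auto. apply cond_pos.
  - intros s t Hs Ht Hst. unfold f. apply Rlt_le, Hdg; auto.
    replace (m + L * s - (m + L * t)) with (L * (s - t)) by ring.
    rewrite Rabs_mult, (Rabs_pos_eq L) by lra.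
    apply (Rmult_lt_reg_r (/ L)); [apply Rinv_0_lt_compat; lra|].
    replace (L * Rabs (s - t) * / L) with (Rabs (s - t)) by (field; lra). exact Hst.
  - intros s Hs. unfold f. pose proof (HxM _ (Hin s Hs)). pose proof (Hxm _ (Hin s Hs)).
    unfold Rabs; repeat destruct Rcase_abs; lra.
  - assert (HP : Poly (fun x => sum_f_R0 (fun k => f (INR k / INR n) * Bn n k ((x - m) / L)) n)).
    { apply Poly_sum; intros k Hk. unfold Bn.
      assert (Ht : Poly (fun x => (x - m) / L)).
      { apply (Poly_ext (fun x => x * (/ L) + (- m / L))). { intros; field; lra. }
        apply Poly_add; [apply Poly_mul; [apply Poly_id|apply Poly_const]|apply Poly_const]. }
      apply Poly_mul; [apply Poly_const|].
      apply Poly_mul; [apply Poly_mul; [apply Poly_const|apply Poly_pow; auto]|].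
      apply Poly_pow. apply Poly_add; [apply Poly_const|].
      apply (Poly_ext (fun x => (-1) * ((x - m) / L))); [intros; ring|].
      apply Poly_mul; [apply Poly_const|auto]. }
    destruct HP as [l Hl]. exists l. intros x Hx. rewrite <- Hl.
    assert (Ht : 0 <= (x - m) / L <= 1).
    { split; [apply Rmult_le_pos; [lra|apply Rlt_le, Rinv_0_lt_compat; lra]|].
      apply (Rmult_le_reg_r L); auto. unfold Rdiv; rewrite Rmult_assoc, Rinv_l by lra. unfold L; lra. }
    specialize (Hn _ Ht). unfold f at 2 in Hn.
    replace (m + L * ((x - m) / L)) with x in Hn by (field; lra). lra.
Qed.

Lemma ival_open a b x : in_ival a b x -> exists r, 0 < r /\ forall y, Rabs (y - x) < r -> in_ival a b y.
Proof.
  intros [Ha Hb].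
  assert (HA : exists ra, 0 < ra /\ forall y, Rabs (y - x) < ra -> Rbar_lt a y).
  { destruct a as [a0| |]; simpl in Ha |- *.
    - exists (x - a0); split; [lra|]. intros y Hy. simpl. revert Hy; unfold Rabs; destruct Rcase_abs; lra.
    - contradiction.
    - exists 1; split; [lra|]; intros; simpl; auto. }
  assert (HB : exists rb, 0 < rb /\ forall y, Rabs (y - x) < rb -> Rbar_lt y b).
  { destruct b as [b0| |]; simpl in Hb |- *.
    - exists (b0 - x); split; [lra|]. intros y Hy. simpl. revert Hy; unfold Rabs; destruct Rcase_abs; lra.
    - exists 1; split; [lra|]; intros; simpl; auto.
    - contradiction. }
  destruct HA as [ra [Hra HA]]; destruct HB as [rb [Hrb HB]].
  exists (Rmin ra rb); split; [apply Rmin_pos; auto|].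
  intros y Hy; split; [apply HA|apply HB]; eapply Rlt_le_trans; eauto; [apply Rmin_l|apply Rmin_r].
Qed.

Lemma ival_locally a b x : in_ival a b x -> locally x (fun y => in_ival a b y).
Proof.
  intros H. destruct (ival_open a b x H) as [r [Hr Hy]].
  exists (mkposreal r Hr). intros y Hb. apply Hy. exact Hb.
Qed.

Lemma ival_conv a b x y t : in_ival a b x -> in_ival a b y -> x <= t <= y -> in_ival a b t.
Proof.
  intros [Hxa Hxb] [Hya Hyb] Ht. split.
  - destruct a as [a0| |]; simpl in *; auto; lra.
  - destruct b as [b0| |]; simpl in *; auto; lra.
Qed.

Lemma ival_inhab a b : Rbar_lt a b -> exists x, in_ival a b x.
Proof.
  intros H. unfold in_ival.
  destruct a as [a0| |]; destruct b as [b0| |]; simpl in *; try contradiction.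
  - exists ((a0 + b0) / 2); simpl; lra.
  - exists (a0 + 1); simpl; lra.
  - exists (b0 - 1); simpl; lra.
  - exists 0; simpl; auto.
Qed.

Lemma taylor_zero_pt (Psi : R -> R) c p :
  sum_f_R0 (fun m => (c - c) ^ m / INR (Factorial.fact m) * Derive_n Psi m c) p = Psi c.
Proof.
  induction p; simpl.
  - field.
  - rewrite IHp. replace (c - c) with 0 by ring. simpl. unfold Rdiv. ring.
Qed.

Lemma smooth_locally Psi a b x n : smooth_on Psi a b -> in_ival a b x ->
  locally x (fun z => forall k, (k <= n)%nat -> ex_derive_n Psi k z).
Proof.
  intros Hs Hx. apply (filter_imp (fun z => in_ival a b z)); [|apply ival_locally; auto].
  intros z Hz k _. apply Hs; auto.
Qed.

Lemma nonpoly_deriv Psi a b n : Rbar_lt a b -> smooth_on Psi a b -> ~ is_poly_on Psi a b ->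
  exists x0, in_ival a b x0 /\ Derive_n Psi n x0 <> 0.
Proof.
  intros Hab Hs Hnp. apply NNPP; intro Hne. apply Hnp.
  assert (H0 : forall x, in_ival a b x -> Derive_n Psi n x = 0).
  { intros x Hx; apply NNPP; intro; apply Hne; eauto. }
  destruct (ival_inhab a b Hab) as [c Hc].
  destruct n as [|p].
  - exists 0%nat, (fun _ => 0). intros x Hx. simpl in H0. rewrite (H0 x Hx). simpl; ring.
  - set (T := fun y => sum_f_R0 (fun m => (y - c) ^ m / INR (Factorial.fact m) * Derive_n Psi m c) p).
    assert (HT : forall y, in_ival a b y -> Psi y = T y).
    { intros y Hy. unfold T. destruct (Rtotal_order c y) as [Hlt|[Heq|Hgt]].
      - destruct (Taylor_Lagrange Psi p c y Hlt) as [z [Hz E]].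
        { intros t Ht k Hk. apply Hs. eapply ival_conv; [exact Hc|exact Hy|exact Ht]. }
        rewrite E, (H0 z); [ring|]. eapply ival_conv; [exact Hc|exact Hy|lra].
      - subst y. rewrite taylor_zero_pt. reflexivity.
      - set (g := fun u => Psi (- u)).
        assert (Hg : forall t, y <= - t <= c -> forall k, Derive_n g k t = (-1) ^ k * Derive_n Psi k (- t)).
        { intros t Ht k. apply Derive_n_comp_opp. apply smooth_locally with a b; auto.
          eapply ival_conv; [exact Hy|exact Hc|exact Ht]. }
        destruct (Taylor_Lagrange g p (- c) (- y)) as [z [Hz E]]; [lra| |].
        { intros t Ht k Hk. apply ex_derive_n_comp_opp. apply smooth_locally with a b; auto.
          eapply ival_conv; [exact Hy|exact Hc|lra]. }
        replace (Psi y) with (g (- y)) by (unfold g; rewrite Ropp_involutive; auto).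
        rewrite E, (Hg z) by lra. rewrite (H0 (- z)) by (eapply ival_conv; [exact Hy|exact Hc|lra]).
        rewrite Rmult_0_r, Rmult_0_r, Rplus_0_r.
        apply sum_eq; intros m Hm. rewrite Hg by lra. rewrite Ropp_involutive.
        replace (y - c) with ((-1) * (- y - - c)) by ring. rewrite Rpow_mult_distr.
        field. apply INR_fact_neq_0. }
    assert (HP : Poly T).
    { unfold T. apply Poly_sum; intros m Hm.
      apply (Poly_ext (fun y => (y + - c) ^ m * (Derive_n Psi m c / INR (Factorial.fact m)))).
      { intros; unfold Rminus, Rdiv; ring. }
      apply Poly_mul; [apply Poly_pow, Poly_add; [apply Poly_id|apply Poly_const]|apply Poly_const]. }
    destruct HP as [l Hl]. exists (length l), (fun k => nth k l 0).
    intros x Hx. rewrite HT, Hl, peval_sum; auto.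
Qed.

Lemma ApproxOn_N1 Psi W a b Rr f : in_N1 Psi W a b f -> ApproxOn Psi W a b Rr f.
Proof.
  intros H eps Heps. exists f; split; auto. intros. rewrite Rminus_eq_0, Rabs_R0; lra.
Qed.

Lemma smooth_cont Psi a b j x : smooth_on Psi a b -> in_ival a b x -> continuity_pt (Derive_n Psi j) x.
Proof.
  intros Hs Hx. apply continuity_pt_filterlim.
  pose proof (@ex_derive_continuous R_AbsRing R_NormedModule (Derive_n Psi j) x (Hs (S j) x Hx)) as H.
  exact H.
Qed.

Lemma between_bound p q c lo hi : lo <= p <= hi -> lo <= q <= hi ->
  Rmin p q <= c <= Rmax p q -> lo <= c <= hi /\ Rabs (c - p) <= Rabs (q - p).
Proof.
  intros Hp Hq Hc. unfold Rmin, Rmax in Hc. destruct (Rle_dec p q); split; try lra;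
  unfold Rabs; repeat destruct Rcase_abs; lra.
Qed.

Lemma deriv_step Psi W a b b0 Rr : smooth_on Psi a b -> no_isolated_points W -> in_ival a b b0 -> 0 < Rr ->
  exists d, 0 < d /\ forall k w, W w -> Rabs w < d ->
    ApproxOn Psi W a b Rr (fun x => x ^ k * Derive_n Psi k (w * x + b0)).
Proof.
  intros Hs HW Hb0 HR.
  destruct (ival_open a b b0 Hb0) as [r [Hr Hrin]].
  set (lo := b0 - r / 2). set (hi := b0 + r / 2).
  assert (HJ : forall t, lo <= t <= hi -> in_ival a b t).
  { intros t Ht. apply Hrin. unfold lo, hi in Ht. unfold Rabs; destruct Rcase_abs; lra. }
  set (d := r / 2 / Rr). assert (Hd : 0 < d) by (unfold d; apply Rdiv_lt_0_compat; lra).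
  assert (HwJ : forall w x, Rabs w < d -> - Rr <= x <= Rr -> lo <= w * x + b0 <= hi).
  { intros w x Hw Hx.
    assert (Rabs (w * x) <= r / 2).
    { rewrite Rabs_mult. assert (Rabs x <= Rr) by (unfold Rabs; destruct Rcase_abs; lra).
      assert (Rabs w * Rabs x <= d * Rr) by (pose proof (Rabs_pos w); pose proof (Rabs_pos x); nra).
      unfold d in H0. replace (r / 2 / Rr * Rr) with (r / 2) in H0 by (field; lra). lra. }
    unfold lo, hi. revert H; unfold Rabs; destruct Rcase_abs; intros; lra. }
  exists d; split; auto.
  intro k; induction k as [|k IH]; intros w Hw Hwd.
  - apply ApproxOn_ext with (g := fun x => Psi (w * x + b0)); [intros; simpl; ring|].
    apply ApproxOn_N1, in_N1_unit; auto.
  - apply ApproxOn_lim. intros eps Heps.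
    assert (HRk : 0 < Rr ^ S k + 1) by (pose proof (pow_lt Rr (S k) HR); lra).
    destruct (Heine (Derive_n Psi (S k)) (fun t => lo <= t <= hi) (compact_P3 lo hi)
       (fun t Ht => smooth_cont Psi a b (S k) t Hs (HJ t Ht))
       (mkposreal (eps / (Rr ^ S k + 1)) ltac:(apply Rdiv_lt_0_compat; lra))) as [eta Heta].
    simpl in Heta.
    set (e1 := Rmin (eta / (Rr + 1)) (d - Rabs w)).
    assert (He1 : 0 < e1).
    { unfold e1. apply Rmin_pos; [apply Rdiv_lt_0_compat; [apply cond_pos|lra]|lra]. }
    destruct (HW w Hw e1 He1) as [v [Hv [Hvw Hvw']]].
    assert (Hvd : Rabs v < d).
    { replace v with (w + (v - w)) by ring. eapply Rle_lt_trans; [apply Rabs_triang|].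
      assert (e1 <= d - Rabs w) by apply Rmin_r. lra. }
    assert (Hvw2 : Rabs (v - w) * Rr < eta).
    { assert (e1 <= eta / (Rr + 1)) by apply Rmin_l.
      assert (Rabs (v - w) * (Rr + 1) < eta).
      { apply Rlt_le_trans with (e1 * (Rr + 1)); [apply Rmult_lt_compat_r; lra|].
        apply Rle_trans with (eta / (Rr + 1) * (Rr + 1)); [apply Rmult_le_compat_r; lra|].
        right; field; lra. }
      pose proof (Rabs_pos (v - w)). nra. }
    assert (Hvw0 : v - w <> 0) by lra.
    exists (fun x => / (v - w) * (x ^ k * Derive_n Psi k (v * x + b0))
                   + (- / (v - w)) * (x ^ k * Derive_n Psi k (w * x + b0))).
    split.
    { apply ApproxOn_add; apply ApproxOn_scal; apply IH; auto. }
    intros x Hx.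
    set (p := w * x + b0). set (q := v * x + b0).
    assert (Hp : lo <= p <= hi) by (apply HwJ; auto).
    assert (Hq : lo <= q <= hi) by (apply HwJ; auto).
    destruct (MVT_gen (Derive_n Psi k) p q (Derive_n Psi (S k))) as [c [Hc Ec]].
    { intros t Ht. apply Derive_correct. apply (Hs (S k)).
      apply HJ. unfold Rmin, Rmax in Ht. destruct (Rle_dec p q); lra. }
    { intros t Ht. apply smooth_cont with a b; auto.
      apply HJ. unfold Rmin, Rmax in Ht. destruct (Rle_dec p q); lra. }
    destruct (between_bound p q c lo hi Hp Hq Hc) as [HcJ Hcp].
    assert (Eqp : q - p = (v - w) * x) by (unfold p, q; ring).
    replace (/ (v - w) * (x ^ k * Derive_n Psi k q) + - / (v - w) * (x ^ k * Derive_n Psi k p)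
             - x ^ S k * Derive_n Psi (S k) p)
      with (x ^ S k * (Derive_n Psi (S k) c - Derive_n Psi (S k) p)).
    2:{ replace (- / (v - w) * (x ^ k * Derive_n Psi k p)) with (/ (v - w) * (- (x ^ k * Derive_n Psi k p))) by ring.
        rewrite <- Rmult_plus_distr_l.
        replace (x ^ k * Derive_n Psi k q + - (x ^ k * Derive_n Psi k p)) with (x ^ k * (Derive_n Psi k q - Derive_n Psi k p)) by ring.
        rewrite Ec, Eqp. simpl. field. auto. }
    rewrite Rabs_mult, <- RPow_abs.
    assert (Hxa : Rabs x <= Rr) by (unfold Rabs; destruct Rcase_abs; lra).
    assert (H1 : Rabs x ^ S k <= Rr ^ S k) by (apply pow_incr; split; [apply Rabs_pos|auto]).
    assert (H2 : Rabs (Derive_n Psi (S k) c - Derive_n Psi (S k) p) < eps / (Rr ^ S k + 1)).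
    { apply Heta; auto. eapply Rle_lt_trans; [exact Hcp|]. rewrite Eqp, Rabs_mult.
      pose proof (Rabs_pos (v - w)). eapply Rle_lt_trans; [|exact Hvw2]. apply Rmult_le_compat_l; auto. }
    assert (H3 : 0 <= Rabs x ^ S k) by (apply pow_le, Rabs_pos).
    pose proof (Rabs_pos (Derive_n Psi (S k) c - Derive_n Psi (S k) p)).
    apply Rle_trans with (Rr ^ S k * (eps / (Rr ^ S k + 1))).
    + apply Rmult_le_compat; auto. lra.
    + apply Rle_trans with ((Rr ^ S k + 1) * (eps / (Rr ^ S k + 1))).
      * apply Rmult_le_compat_r; [apply Rlt_le, Rdiv_lt_0_compat; lra| lra].
      * right; field; lra.
Qed.

Lemma approx_of_ApproxOn Psi W a b g :
  (forall Rr, 0 < Rr -> ApproxOn Psi W a b Rr g) -> approximable (in_N1 Psi W a b) g.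
Proof.
  intros H K HK _ eps Heps.
  destruct (compact_P1 K HK) as [m [M HmM]].
  set (Rr := Rabs m + Rabs M + 1).
  assert (HR : 0 < Rr) by (unfold Rr; pose proof (Rabs_pos m); pose proof (Rabs_pos M); lra).
  destruct (H Rr HR (eps / 2)) as [s [Hs B]]; [lra|].
  exists s; split; auto. exists (eps / 2); split; [lra|].
  intros x Hx. apply B. destruct (HmM x Hx). unfold Rr.
  revert H0 H1; unfold Rabs; repeat destruct Rcase_abs; intros; lra.
Qed.

Lemma ApproxOn_peval Psi W a b Rr :
  (forall n, ApproxOn Psi W a b Rr (fun x => x ^ n)) -> forall l, ApproxOn Psi W a b Rr (peval l).
Proof.
  intros Hn.
  assert (forall l j, ApproxOn Psi W a b Rr (fun x => x ^ j * peval l x)).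
  { induction l as [|c l IH]; intros j; simpl.
    - apply ApproxOn_ext with (g := fun _ => 0); [intros; ring|apply ApproxOn_zero].
    - apply ApproxOn_ext with (g := fun x => c * x ^ j + x ^ (S j) * peval l x); [intros; simpl; ring|].
      apply ApproxOn_add; [apply ApproxOn_scal, Hn|apply IH]. }
  intros l. apply ApproxOn_ext with (g := fun x => x ^ 0 * peval l x); [intros; simpl; ring|apply H].
Qed.

Theorem lemma4p1p5 (W : R -> Prop) (Psi : R -> R) (a b : Rbar) :
  no_isolated_points W -> W 0 ->
  Rbar_lt a b -> smooth_on Psi a b -> ~ is_poly_on Psi a b ->
  (forall n : nat, approximable (in_N1 Psi W a b) (fun x => x ^ n)) /\
  dense_in_CR (in_N1 Psi W a b).
Proof.
  intros HW HW0 Hab Hs Hnp.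
  assert (Hmon : forall Rr n, 0 < Rr -> ApproxOn Psi W a b Rr (fun x => x ^ n)).
  { intros Rr n HR.
    destruct (nonpoly_deriv Psi a b n Hab Hs Hnp) as [b0 [Hb0 Hne]].
    destruct (deriv_step Psi W a b b0 Rr Hs HW Hb0 HR) as [d [Hd Hst]].
    assert (H0 : Rabs 0 < d) by (rewrite Rabs_R0; auto).
    pose proof (ApproxOn_scal Psi W a b Rr (/ Derive_n Psi n b0) _ (Hst n 0 HW0 H0)) as Hsc.
    apply ApproxOn_ext with (2 := Hsc). intros x _.
    replace (0 * x + b0) with b0 by ring. field; auto. }
  split.
  - intros n. apply approx_of_ApproxOn. intros Rr HR. apply Hmon; auto.
  - intros g Hg. apply approx_of_ApproxOn. intros Rr HR.
    apply ApproxOn_lim. intros eps Heps.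
    destruct (weierstrass g (- Rr) Rr ltac:(lra) (fun x _ => Hg x) eps Heps) as [l Hl].
    exists (peval l); split; auto.
    apply ApproxOn_peval. intros n; apply Hmon; auto.
Qed.
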